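(* Let $r\geq 3$ and let $G_1$ be the pan graph with vertex set $\{u_0,u_1,\dots,u_r\}$ and edge set $$E(G_1)=\{u_0u_r,\ u_1u_2,\ u_{r-1}u_r\}\cup\{u_ju_{j+2}: 1\le j\le r-2\}$$ (so $u_1,\dots,u_r$ span a cycle of length $r$ and $u_0$ is a pendant vertex attached to $u_r$). Let $H_0,H_1,\dots,H_r$ be connected graphs, each with at least two vertices, with $n_i=|V(H_i)|$, ordered so that $n_0\le n_1\le\dots\le n_r$. Let $\Gamma=G_1\diamond(H_0,H_1,\dots,H_r)$ be the generalized edge corona in which every vertex of $H_0$ is joined to $u_0$ and $u_r$, every vertex of $H_1$ is joined to $u_1$ and $u_2$, for each $j\in\{1,\dots,r-2\}$ every vertex of $H_{j+1}$ is joined to $u_j$ and $u_{j+2}$, and every vertex of $H_r$ is joined to $u_{r-1}$ and $u_r$. Suppose that (a) $\Delta(H_0)<\delta(H_1)$; (b) $\Delta(H_i)\le\delta(H_{i+1})$ for all $i\in\{1,\dots,r-1\}$; (c) $d'(u_0)\le\delta'(H_i)$ for all $i\in\{0,1,\dots,r\}$; (d) $\Delta'(H_r)\le d'(u_1)$. Then $\Gamma$ is antimagic.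
   Context: All graphs are simple and undirected. A graph $G$ is antimagic if there is a bijection $f:E(G)\to\{1,2,\dots,|E(G)|\}$ such that the vertex sums $w(v)=\sum_{e\ni v}f(e)$ are pairwise distinct over all vertices $v$. For a graph $G$ with $m$ edges $e_1,\dots,e_m$ and graphs $H_1,\dots,H_m$, the generalized edge corona $G\diamond(H_1,\dots,H_m)$ is obtained from disjoint copies of $G,H_1,\dots,H_m$ by joining both end vertices of $e_i$ to every vertex of $H_i$, for each $i$. $\Delta(H)$ and $\delta(H)$ denote the maximum and minimum degree of $H$ itself. For a vertex $v$ of $\Gamma$, $d'(v)$ denotes its degree in $\Gamma$; $\Delta'(H_i)$ and $\delta'(H_i)$ denote the maximum and minimum of $d'(v)$ over $v\in V(H_i)$ (so $d'(v)=\deg_{H_i}(v)+2$ for $v\in V(H_i)$). *)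

(* Defs.v *)
From mathcomp Require Import all_boot.
Set Implicit Arguments. Unset Strict Implicit. Unset Printing Implicit Defensive.

Section Graph.
Variable T : finType.
Variable adj : rel T.

Definition simple_graph := symmetric adj /\ irreflexive adj.

Definition edges : {set {set T}} := [set e : {set T} | [exists x : T, exists y : T, adj x y && (e == [set x; y])]].

Definition deg (v : T) : nat := #|[set y | adj v y]|.

Definition connected_graph := forall x y : T, connect adj x y.

(* maximum / minimum degree (T nonempty for the minimum to be meaningful) *)
Definition maxdeg : nat := \max_(x : T) deg x.
Definition mindeg : nat := \big[minn/#|T|]_(x : T) deg x.

(* antimagic: a bijection f : E -> {1,...,|E|} (f injective on E with values in
   [1,|E|]) such that the vertex sums w(v) = sum_{e ∋ v} f(e) are pairwise distinct *)
Definition vsum (f : {set T} -> nat) (v : T) : nat := \sum_(e in edges | v \in e) f e.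

Definition antimagic : Prop :=
  exists f : {set T} -> nat,
    [/\ {in edges &, injective f},
        {in edges, forall e, 1 <= f e <= #|edges|} &
        injective (vsum f)].
End Graph.

Definition upair (a b c d : nat) : bool := ((a == c) && (b == d)) || ((a == d) && (b == c)).

Definition pan_adj (r : nat) (a b : nat) : bool :=
  [|| upair a b 0 r, upair a b 1 2, upair a b r.-1 r
    | [exists j : 'I_r.+1, (1 <= j <= r - 2) && upair a b j (j + 2)]].

Definition attach_edge (r i : nat) : nat * nat :=
  if i == 0 then (0, r)
  else if i == 1 then (1, 2)
  else if i == r then (r.-1, r)
  else (i.-1, i.+1).

Definition attached (r i a : nat) : bool :=
  (a == (attach_edge r i).1) || (a == (attach_edge r i).2).

Section Corona.
Variable r : nat.
Variable n : 'I_r.+1 -> nat.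
Variable H : forall i : 'I_r.+1, rel 'I_(n i).

(* vertices: inl u_a, or inr (i, x) = vertex x of the copy of H_i *)
Definition cvert : finType := ('I_r.+1 + {i : 'I_r.+1 & 'I_(n i)})%type.

Definition cadj (p q : cvert) : bool :=
  match p, q with
  | inl a, inl b => pan_adj r a b
  | inl a, inr x => attached r (tag x) a
  | inr x, inl a => attached r (tag x) a
  | inr x, inr y => (tag x == tag y) && H (tagged x) (tagged_as x y)
  end.

Definition u (a : nat) : cvert := inl (inord a).
Definition hv (i : 'I_r.+1) (x : 'I_(n i)) : cvert := inr (Tagged (fun j => 'I_(n j)) x).

Definition cdeg (v : cvert) : nat := deg cadj v.
Definition cmaxdeg (i : 'I_r.+1) : nat := \max_(x : 'I_(n i)) cdeg (hv x).
Definition cmindeg (i : 'I_r.+1) : nat := \big[minn/#|cvert|]_(x : 'I_(n i)) cdeg (hv x).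
End Corona.

(* Main.v *)
Require Import Defs.
From mathcomp Require Import all_boot zify.
Set Implicit Arguments. Unset Strict Implicit. Unset Printing Implicit Defensive.

Lemma thr_gen (I J : finType) (P : pred I) (Q : pred J) (g : I -> nat) (h : J -> nat) x0 :
  P x0 ->
  \sum_(x | P x) 1 <= \sum_(y | Q y) 1 ->
  (forall x y, P x -> Q y -> g x < h y) ->
  \sum_(x | P x) g x < \sum_(y | Q y) h y.
Proof.
move=> Px0 hc hlt.
have [x1 Px1 hM] : exists2 x1, P x1 & \max_(x | P x) g x = g x1.
  by exists [arg max_(i > x0 | P i) g i]; [case: arg_maxnP | apply: bigmax_eq_arg].
have h1 : \sum_(x | P x) g x <= \sum_(x | P x) 1 * g x1.
  by apply: leq_sum => x Px; rewrite mul1n -hM; apply: leq_bigmax_cond.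
have h2 : \sum_(y | Q y) 1 * (g x1).+1 <= \sum_(y | Q y) h y.
  by apply: leq_sum => y Qy; rewrite mul1n; apply: hlt.
rewrite -big_distrl /= in h1; rewrite -big_distrl /= in h2.
have hp : 0 < \sum_(x | P x) 1 by rewrite (bigD1 x0).
apply: (leq_trans _ h2); apply: (leq_ltn_trans h1). nia.
Qed.

Lemma thr_le (I J : finType) (P : pred I) (Q : pred J) (g : I -> nat) (h : J -> nat) :
  \sum_(x | P x) 1 <= \sum_(y | Q y) 1 ->
  (forall x y, P x -> Q y -> g x < h y) ->
  \sum_(x | P x) g x <= \sum_(y | Q y) h y.
Proof.
move=> hc hlt.
case: (pickP P) => [x0 Px0|P0]; last by rewrite big_pred0 // => x; rewrite P0.
by apply: ltnW; apply: thr_gen Px0 hc hlt.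
Qed.

Section Rank.
Variable T : finType.
Variable E : {set T}.
Variable k : T -> nat.
Hypothesis kinj : injective k.
Definition rk (e : T) : nat := #|[set e' in E | k e' < k e]|.+1.

Lemma rk_lt e e' : e \in E -> k e < k e' -> rk e < rk e'.
Proof.
move=> eE lt; rewrite /rk ltnS; apply: proper_card; apply/properP; split.
  apply/subsetP => x; rewrite !inE => /andP[-> /= h]; exact: ltn_trans h lt.
by exists e; rewrite !inE ?eE ?lt // ltnn.
Qed.


Lemma rk_bound e : e \in E -> 0 < rk e <= #|E|.
Proof.
move=> eE; rewrite /rk /= (cardsD1 e E) eE add1n ltnS.
apply: subset_leq_card; apply/subsetP => x; rewrite !inE => /andP[-> h]; rewrite andbT.
by apply/eqP => xe; rewrite xe ltnn in h.
Qed.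

Lemma rk_injE : {in E &, injective rk}.
Proof.
move=> e e' eE e'E h; apply: kinj.
case: (ltngtP (k e) (k e')) => // lt.
- by have := rk_lt eE lt; rewrite h ltnn.
- by have := rk_lt e'E lt; rewrite h ltnn.
Qed.
End Rank.

Section G2.
Variable T : finType.
Variable adj : rel T.
Hypothesis hsym : symmetric adj.
Hypothesis hirr : irreflexive adj.

Lemma edge_in x y : adj x y -> [set x; y] \in edges adj.
Proof. by move=> h; rewrite inE; apply/existsP; exists x; apply/existsP; exists y; rewrite h eqxx. Qed.

Lemma adj_neq x y : adj x y -> x != y.
Proof. by move=> h; apply/eqP => e; rewrite e hirr in h. Qed.

Lemma vsumE f v : vsum adj f v = \sum_(y | adj v y) f [set v; y].
Proof.
rewrite /vsum.
have inj : {in [pred y | adj v y] &, injective (fun y => [set v; y])}.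
  move=> y y' /= hy hy' e.
  have : y' \in [set v; y] by rewrite e !inE eqxx orbT.
  rewrite !inE => /orP[/eqP hv|/eqP //].
  by move: hy'; rewrite hv inE hirr.
rewrite -(big_imset (fun e => f e) inj) /=.
apply: eq_bigl => e; apply/idP/idP.
- case/andP => /[dup] eE.
  rewrite inE => /existsP[x /existsP[y /andP[hxy /eqP ->]]].
  rewrite !inE => /orP[/eqP ->|/eqP ->].
  + by apply/imsetP; exists y => //; rewrite inE.
  + by apply/imsetP; exists x; rewrite ?inE 1?hsym // setUC.
- case/imsetP => y; rewrite inE => hy ->.
  by rewrite edge_in // !inE eqxx.
Qed.

Lemma degE v : deg adj v = \sum_(y | adj v y) 1.
Proof. by rewrite /deg sum1_card cardsE. Qed.
End G2.

Definition pan_arith r a b :=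
  [|| upair a b 0 r, upair a b 1 2, upair a b r.-1 r,
      (1 <= a <= r - 2) && (b == a + 2) | (1 <= b <= r - 2) && (a == b + 2)].

Lemma pan_adjE r a b : pan_adj r a b = pan_arith r a b.
Proof.
rewrite /pan_adj /pan_arith; congr [|| _, _, _ | _].
apply/existsP/idP.
- case=> j /andP[hj]; rewrite /upair => /orP[/andP[/eqP -> /eqP ->]|/andP[/eqP -> /eqP ->]].
  + by rewrite hj eqxx.
  + by rewrite hj eqxx orbT.
- case/orP => /andP[h /eqP ->].
  + have hr : a < r.+1 by lia.
    by exists (Ordinal hr); rewrite /= h /upair !eqxx.
  + have hr : b < r.+1 by lia.
    by exists (Ordinal hr); rewrite /= h /upair !eqxx orbT.
Qed.

Definition aj (j : nat) := if j == 1 then 2 else if j == 2 then 1 else j - 2.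
Definition bj r j := if j == r then r.-1 else if j == r.-1 then r else j + 2.

Lemma hub_nbr r j b : 3 <= r -> 1 <= j <= r -> b <= r ->
  pan_adj r j b = [|| b == aj j, b == bj r j | (j == r) && (b == 0)].
Proof.
move=> hr hj hb; rewrite pan_adjE /pan_arith /upair /aj /bj.
apply/idP/idP; do ! case: ifP; lia.
Qed.

Definition alpha j := maxn 1 j.-1.
Definition beta r j := minn r j.+1.

Lemma att_char r i j : 3 <= r -> 1 <= j <= r -> i <= r ->
  attached r i j && (i != 0) = (i == alpha j) || (i == beta r j).
Proof.
move=> hr hj hi; rewrite /attached /attach_edge /alpha /beta.
apply/idP/idP; do ! case: ifP => /=; lia.
Qed.
Lemma upairC a b c d : upair a b c d = upair b a c d.
Proof. by rewrite /upair orbC andbC [(a == c) && _]andbC. Qed.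
Lemma pan_symm r a b : pan_adj r a b = pan_adj r b a.
Proof. rewrite !pan_adjE /pan_arith !(upairC a b); congr [|| _, _, _ | _]; exact: orbC. Qed.
Lemma pan_irrr r a : 3 <= r -> pan_adj r a a = false.
Proof. move=> hr; rewrite !pan_adjE /pan_arith /upair !orbb; apply/negP; rewrite /=. Time lia. Qed.

Lemma sum_at (T : finType) (P : pred T) (G : T -> nat) q :
  \sum_(y | P y) G y = (if P q then G q else 0) + \sum_(y | P y && (y != q)) G y.
Proof.
case: (boolP (P q)) => Pq; first by rewrite (bigD1 q).
rewrite add0n; apply: eq_bigl => y; case: eqP => [->|]; by rewrite ?(negbTE Pq) ?andbT.
Qed.

Lemma bigmin_le (T : finType) (g : T -> nat) d y : \big[minn/d]_(x : T) g x <= g y.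
Proof.
have : y \in index_enum T by rewrite mem_index_enum.
elim: (index_enum T) => // a s IH; rewrite inE big_cons => /orP[/eqP ->|ys].
  exact: geq_minl.
exact: leq_trans (geq_minr _ _) (IH ys).
Qed.

Lemma sum_sub (T : finType) (P Q : pred T) (G : T -> nat) :
  \sum_(y | P y && Q y) G y <= \sum_(y | P y) G y.
Proof. by rewrite [X in _ <= X](bigID Q) /= leq_addr. Qed.

Lemma enc_lt_b K b b' c1 c2 c1' c2' : b < b' -> c1 < K -> c2 < K -> (b * K + c1) * K + c2 < (b' * K + c1') * K + c2'.
Proof. move=> h1 h2 h3. nia. Qed.
Lemma enc_lt_c1 K b c1 c2 c1' c2' : c1 < c1' -> c2 < K -> (b * K + c1) * K + c2 < (b * K + c1') * K + c2'.
Proof. move=> h1 h2. nia. Qed.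
Lemma enc_lt_c2 K b c1 c2 c2' : c2 < c2' -> (b * K + c1) * K + c2 < (b * K + c1) * K + c2'.
Proof. move=> h1. nia. Qed.

Definition srank N (g : 'I_N -> nat) (x : 'I_N) : nat :=
  #|[pred y : 'I_N | g y * N + y < g x * N + x]|.

Section Srank.
Variables (N : nat) (g : 'I_N -> nat).
Local Notation code := (fun y : 'I_N => g y * N + y).

Lemma srank_lt x : srank g x < N.
Proof.
rewrite /srank; have := cardC1 x; rewrite card_ord => hc.
have : #|[pred y : 'I_N | g y * N + y < g x * N + x]| <= #|predC1 x|.
  apply: subset_leq_card; apply/subsetP => y; rewrite !inE => h.
  by apply/eqP => yx; rewrite yx ltnn in h.
rewrite hc; have := ltn_ord x; lia.
Qed.

Lemma code_inj x y : code x = code y -> x = y.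
Proof.
move=> /= e; apply: val_inj => /=.
have : (g x * N + x) %% N = (g y * N + y) %% N by rewrite e.
by rewrite !modnMDl !modn_small.
Qed.

Lemma srank_mono x x' : code x < code x' -> srank g x < srank g x'.
Proof.
move=> /= lt; rewrite /srank; apply: proper_card; apply/properP; split.
  apply/subsetP => y; rewrite !inE => h; exact: ltn_trans h lt.
by exists x; rewrite !inE ?lt // ltnn.
Qed.

Lemma srank_inj : injective (srank g).
Proof.
move=> x x' e; case: (ltngtP (code x) (code x')) => [lt|gt|eq].
- by have := srank_mono lt; rewrite e ltnn.
- by have := srank_mono gt; rewrite e ltnn.
- exact: code_inj.
Qed.

Lemma srank_sorted x x' : srank g x < srank g x' -> g x <= g x'.
Proof.
move=> lt; rewrite leqNgt; apply/negP => gt.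
have : code x' < code x.
  have := ltn_ord x'; have := ltn_ord x => h1 h2 /=.
  apply: (@leq_trans ((g x').+1 * N)); first by rewrite mulSn addnC ltn_add2r.
  apply: leq_trans (leq_addr _ _); exact: leq_mul.
by move/srank_mono; rewrite ltnNge (ltnW lt).
Qed.
End Srank.

Set Implicit Arguments. Unset Strict Implicit. Unset Printing Implicit Defensive.

Unset Implicit Arguments.
Section Main.
Variables (r : nat) (n : 'I_r.+1 -> nat) (H : forall i : 'I_r.+1, rel 'I_(n i)).
Hypothesis hr : 3 <= r.
Hypothesis Hsimple : forall i, simple_graph (H i).

Local Notation V := (cvert n).
Local Notation adj := (cadj H).
Local Notation TT := {i : 'I_r.+1 & 'I_(n i)}.

Lemma adj_hv i (x y : 'I_(n i)) : adj (hv x) (hv y) = H i x y.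
Proof. by rewrite /= eqxx tagged_asE. Qed.

Lemma adj_hv_tag i (x : 'I_(n i)) (z : TT) : tag z != i -> adj (hv x) (inr z) = false.
Proof.
case: z => j y /= ne; case: eqP => [e|_] //; by rewrite e eqxx in ne.
Qed.

Lemma adj_hv_hub i (x : 'I_(n i)) (a : 'I_r.+1) : adj (hv x) (inl a) = attached r i a.
Proof. by []. Qed.

Lemma pan_sym a b : pan_adj r a b = pan_adj r b a.
Proof. exact: pan_symm. Qed.

Lemma pan_irr a : pan_adj r a a = false.
Proof. exact: pan_irrr. Qed.

Lemma cadj_sym : symmetric adj.
Proof.
case=> [a|[i x]] [b|[j y]] //=; first exact: pan_sym.
case: (eqVneq i j) => [e|ne] //.
subst j; rewrite !tagged_asE; exact: (Hsimple i).1.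
Qed.

Lemma cadj_irr : irreflexive adj.
Proof.
case=> [a|[i x]] /=; first exact: pan_irr.
by rewrite eqxx tagged_asE (Hsimple i).2.
Qed.

Lemma sum_split (p : V) (G : V -> nat) :
  \sum_(y | adj p y) G y =
  \sum_(a | adj p (inl a)) G (inl a) + \sum_(z | adj p (inr z)) G (inr z).
Proof. exact: big_sumType. Qed.

Lemma sum_tag (P : pred TT) (G : TT -> nat) :
  \sum_(z | P z) G z = \sum_(i : 'I_r.+1) \sum_(x : 'I_(n i) | P (Tagged (fun j => 'I_(n j)) x)) G (Tagged (fun j => 'I_(n j)) x).
Proof.
rewrite (sig_big_dep xpredT (fun i (x : 'I_(n i)) => P (Tagged (fun j => 'I_(n j)) x))
            (fun i (x : 'I_(n i)) => G (Tagged (fun j => 'I_(n j)) x))) /=.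
by apply: eq_big => -[i x].
Qed.

Lemma sum_hv_inr i (x : 'I_(n i)) (G : TT -> nat) :
  \sum_(z | adj (hv x) (inr z)) G z = \sum_(y | H i x y) G (Tagged (fun j => 'I_(n j)) y).
Proof.
rewrite sum_tag (bigD1 i) //= [X in _ + X]big1 ?addn0.
  by apply: eq_bigl => y; rewrite eqxx tagged_asE.
move=> j ne; rewrite big_pred0 // => y; rewrite -/(hv x); exact: adj_hv_tag.
Qed.

Lemma sum_tag_cnt (P : pred 'I_r.+1) :
  \sum_(z : TT | P (tag z)) 1 = \sum_(i | P i) n i.
Proof.
rewrite sum_tag [RHS]big_mkcond /=; apply: eq_bigr => i _ /=.
case: (P i); last by rewrite big_pred0.
by rewrite sum1_card card_ord.
Qed.

Lemma sum2 (G : 'I_r.+1 -> nat) (p q : nat) : p <= r -> q <= r -> p != q ->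
  \sum_(a : 'I_r.+1 | (a == p :> nat) || (a == q :> nat)) G a = G (inord p) + G (inord q).
Proof.
move=> hp hq ne.
rewrite (bigD1 (inord p)) /=; last by rewrite inordK ?eqxx.
rewrite (big_pred1 (inord q)) // => a /=.
apply/andP/eqP.
- case=> /orP[/eqP hap|/eqP haq] hne.
    by case/eqP: hne; apply: val_inj; rewrite /= inordK.
  by apply: val_inj; rewrite /= inordK.
- move=> ->; rewrite !inordK // eqxx orbT; split => //.
  apply/eqP => /(congr1 val) /=; rewrite !inordK //; apply/eqP; rewrite eq_sym.
  exact: ne.
Qed.


Definition offs (i : nat) : nat := \sum_(k < i) n (inord k).
Fact Kc_key : unit. Proof. exact: tt. Qed.
Definition Kc : nat := locked_with Kc_key (offs r.+1 + r.*2.+1).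
Lemma KcE : Kc = offs r.+1 + r.*2.+1. Proof. exact: unlock. Qed.
Definition enc (b c1 c2 : nat) : nat := (b * Kc + c1) * Kc + c2.
Arguments offs : simpl never.
Arguments Kc : simpl never.
Arguments enc : simpl never.

Variable pos : forall i : 'I_r.+1, 'I_(n i) -> nat.

Definition idx (z : TT) : nat := offs (tag z) + pos (tag z) (tagged z).
Arguments idx : simpl never.
Definition spk (a : 'I_r.+1) (z : TT) : nat :=
  if a == 0 :> nat then 0 else enc 3 (if tag z == 0 :> nat then 0 else a) (idx z).
Definition pk (p q : V) : nat :=
  match p, q with
  | inl a, inl b => if (a == 0 :> nat) || (b == 0 :> nat) then 0 else enc 4 (a + b) 0
  | inl a, inr z => spk a z
  | inr z, inl a => spk a z
  | inr z, inr z' => enc 2 (maxn (tag z) (tag z')) 0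
  end.
Definition pkset (e : {set V}) : nat := \max_(x in e) \max_(y in e | y != x) pk x y.
Definition Cset : nat := #|{set V}|.
Definition key (e : {set V}) : nat := pkset e * Cset + enum_rank e.
Definition lab : {set V} -> nat := rk (edges adj) key.
Definition F (p q : V) : nat := lab [set p; q].

Lemma pk_sym p q : pk p q = pk q p.
Proof.
case: p q => [a|z] [b|z'] /=.
- by rewrite orbC addnC.
- by [].
- by [].
- by rewrite maxnC.
Qed.

Lemma pkset2 p q : p != q -> pkset [set p; q] = pk p q.
Proof.
move=> ne; rewrite /pkset big_setU1 ?inE // big_set1.
have h1 : forall a b, a != b -> \max_(y in [set a; b] | y != a) pk a y = pk a b.
  move=> a b nab; rewrite (big_pred1 b) // => y; rewrite !inE.
  apply/andP/eqP => [[/orP[/eqP ya|/eqP //] yna]|->].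
    by rewrite ya eqxx in yna.
  by rewrite eqxx orbT eq_sym.
have ne' : q != p by rewrite eq_sym.
rewrite h1 // setUC h1 // /= (pk_sym q p); exact: maxnn.
Qed.

Lemma key_inj : injective key.
Proof.
move=> e e' h.
have : (key e) %% Cset = (key e') %% Cset by rewrite h.
rewrite /key !modnMDl !modn_small; try exact: ltn_ord.
by move/val_inj/enum_rank_inj.
Qed.

Lemma Flt p q p' q' : adj p q -> adj p' q' -> pk p q < pk p' q' -> F p q < F p' q'.
Proof.
move=> h h' lt; apply: rk_lt; first exact: edge_in.
rewrite /key !pkset2; try exact: (adj_neq cadj_irr).
have := ltn_ord (enum_rank [set p; q]); rewrite -/Cset => hc.
apply: (@leq_trans ((pk p q).+1 * Cset)).
  by rewrite mulSn addnC ltn_add2r.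
apply: leq_trans (leq_addr _ _); exact: leq_mul.
Qed.

Lemma Fsym p q : F p q = F q p.
Proof. by rewrite /F setUC. Qed.


Hypothesis pos_lt : forall i x, pos i x < n i.
Hypothesis Hc : forall i, cdeg H (u n 0) <= cmindeg H i.

Definition w (p : V) : nat := vsum adj lab p.
Lemma wE p : w p = \sum_(y | adj p y) F p y.
Proof. exact: (vsumE cadj_sym cadj_irr). Qed.
Lemma cdegE p : cdeg H p = \sum_(y | adj p y) 1.
Proof. exact: degE. Qed.

Lemma Kc_pos : 0 < Kc.
Proof. by rewrite KcE addnS. Qed.
Lemma enc_pos b c1 c2 : 0 < b -> 0 < enc b c1 c2.
Proof. move=> hb; have := Kc_pos; rewrite /enc; nia. Qed.

Lemma val_inord j : j <= r -> (inord j : 'I_r.+1) = j :> nat.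
Proof. by move=> h; rewrite inordK. Qed.

Lemma pk_u0 y : pk (u n 0) y = 0.
Proof. by case: y => [b|z] /=; rewrite /spk val_inord. Qed.

Lemma adj_u0_ur : adj (u n 0) (u n r).
Proof. by rewrite /= !val_inord // pan_adjE /pan_arith /upair !eqxx. Qed.

Lemma R1 i (x : 'I_(n i)) : w (u n 0) < w (hv x).
Proof.
rewrite !wE (sum_at _ _ (hv x)) [X in _ < X](sum_at _ _ (u n 0)) cadj_sym Fsym.
rewrite ltn_add2l.
apply: (thr_gen (x0 := u n r)).
- by rewrite adj_u0_ur.
- have h := leq_trans (Hc i) (bigmin_le (fun x => cdeg H (hv x)) _ x).
  by rewrite !cdegE (sum_at _ _ (hv x)) [X in _ <= X](sum_at _ _ (u n 0)) cadj_sym leq_add2l in h.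
- move=> y y' /andP[hy _] /andP[hy' ne']; apply: Flt => //; rewrite pk_u0.
  case: y' hy' ne' => [a|z] /= hy' ne'.
  + rewrite /spk; case: eqP => [a0|_]; last exact: enc_pos.
    by case/eqP: ne'; congr inl; apply: val_inj; rewrite /= a0 val_inord.
  + exact: enc_pos.
Qed.


Lemma offs_S i : offs i.+1 = offs i + n (inord i).
Proof. by rewrite /offs big_ord_recr. Qed.

Lemma offs_mono i j : i <= j -> offs i <= offs j.
Proof.
elim: j => [|j IH]; first by rewrite leqn0 => /eqP ->.
rewrite leq_eqVlt => /orP[/eqP -> //|]; rewrite ltnS => /IH h.
by rewrite offs_S; apply: leq_trans h (leq_addr _ _).
Qed.

Lemma idx_next (z : TT) : idx z < offs (tag z).+1.
Proof.
case: z => i x; rewrite /idx /= offs_S inord_val ltn_add2l; exact: pos_lt.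
Qed.

Lemma idx_Kc z : idx z < Kc.
Proof.
apply: (leq_trans (idx_next z)); rewrite KcE; apply: leq_trans (leq_addr _ _).
apply: offs_mono; exact: ltn_ord.
Qed.

Lemma r_Kc : r.*2 < Kc.
Proof. by rewrite KcE addnS ltnS leq_addl. Qed.

Lemma idx_tag (z z' : TT) : tag z < tag z' -> idx z < idx z'.
Proof.
move=> lt; apply: (leq_trans (idx_next z)); apply: leq_trans (leq_addr _ _).
exact: offs_mono.
Qed.

Lemma idx_pos i (x x' : 'I_(n i)) : pos i x < pos i x' ->
  idx (Tagged (fun j => 'I_(n j)) x) < idx (Tagged (fun j => 'I_(n j)) x').
Proof. by rewrite /idx /= ltn_add2l. Qed.

Lemma enc_le0 b c1 c2 : enc b 0 0 <= enc b c1 c2.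
Proof. rewrite /enc; nia. Qed.

Lemma enc3_lt c c' d d' : c <= c' -> d < d' -> d < Kc -> enc 3 c d < enc 3 c' d'.
Proof.
rewrite leq_eqVlt => /orP[/eqP <-|lt] h1 h2; first exact: enc_lt_c2.
exact: enc_lt_c1.
Qed.

Definition low (p y : V) : bool := pk p y < enc 3 0 0.
Definition sl (p : V) : nat := \sum_(y | adj p y && low p y) F p y.
Definition ph (p : V) : nat := \sum_(y | adj p y && ~~ low p y) F p y.

Lemma w_split p : w p = sl p + ph p.
Proof. by rewrite wE (bigID (low p)). Qed.

Lemma low_hub i (x : 'I_(n i)) (a : 'I_r.+1) : low (hv x) (inl a) = (a == 0 :> nat).
Proof.
rewrite /low /= /spk; case: eqP => _; first exact: enc_pos.
by apply/negbTE; rewrite -leqNgt enc_le0.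
Qed.

Lemma low_inr i (x : 'I_(n i)) z : low (hv x) (inr z) = true.
Proof.
rewrite /low /=; apply: enc_lt_b => //; last exact: Kc_pos.
have hm : maxn i (tag z) <= r.*2.
  rewrite geq_max; apply/andP; split; rewrite -addnn; apply: leq_trans (leq_addr _ _);
  rewrite -ltnS; exact: ltn_ord.
exact: leq_ltn_trans hm r_Kc.
Qed.

Lemma low_bound i (x : 'I_(n i)) y : adj (hv x) y -> low (hv x) y ->
  pk (hv x) y <= enc 2 i 0 /\ (i != 0 :> nat -> pk (hv x) y = enc 2 i 0).
Proof.
case: y => [a|[j y]].
- rewrite low_hub /= /attached /attach_edge => ha /eqP a0.
  rewrite /spk a0 /=; split => // ine.
  by move: ha; rewrite a0 (negbTE ine); do ! case: ifP; move=> /=; lia.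
- rewrite /= => /andP[/eqP ij _] _; subst j; by rewrite maxnn.
Qed.

Lemma cnt_low i (x : 'I_(n i)) :
  \sum_(y | adj (hv x) y && low (hv x) y) 1 = deg (H i) x + (i == 0 :> nat).
Proof.
rewrite big_sumType addnC; congr (_ + _).
- rewrite (eq_bigl (fun a : 'I_r.+1 => attached r i a && (a == 0 :> nat))); last first.
    by move=> a; rewrite low_hub.
  case: (eqVneq (i : nat) 0) => [i0|i0].
  + rewrite (big_pred1 ord0) // => a /=; rewrite /attached /attach_edge i0 /=.
    apply/idP/eqP => [/andP[_ /eqP a0]|->]; first by apply: val_inj.
    by rewrite eqxx.
  + rewrite big_pred0 // => a /=; apply/negP => /andP[].
    rewrite /attached /attach_edge (negbTE i0) => h /eqP a0; move: h; rewrite a0.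
    by do ! case: ifP; move=> /=; lia.
- rewrite (eq_bigl (fun z => adj (hv x) (inr z))); last by move=> z; rewrite low_inr andbT.
  by rewrite (sum_hv_inr i x (fun _ => 1)) degE.
Qed.


Lemma att_props i : 1 <= i <= r ->
  [/\ 1 <= (attach_edge r i).1, (attach_edge r i).1 < (attach_edge r i).2 & (attach_edge r i).2 <= r].
Proof. move=> hi; rewrite /attach_edge; do ! case: ifP => /=; move=> *; split; lia. Qed.

Lemma att_mono i i' : 1 <= i -> i <= i' -> i' <= r ->
  (attach_edge r i).1 <= (attach_edge r i').1 /\ (attach_edge r i).2 <= (attach_edge r i').2.
Proof. move=> h1 h2 h3; rewrite /attach_edge; do ! case: ifP => /=; lia. Qed.

Lemma ph_hv i (x : 'I_(n i)) :
  ph (hv x) = \sum_(a : 'I_r.+1 | attached r i a && (a != 0 :> nat)) F (hv x) (inl a).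
Proof.
rewrite /ph big_sumType /= [X in _ + X]big_pred0 ?addn0; last by move=> z; rewrite low_inr andbF.
by apply: eq_bigl => a; rewrite low_hub.
Qed.

Lemma ph_hv1 i (x : 'I_(n i)) : i != 0 :> nat ->
  ph (hv x) = F (hv x) (u n (attach_edge r i).1) + F (hv x) (u n (attach_edge r i).2).
Proof.
move=> i0; have [h1 h2 h3] : [/\ 1 <= (attach_edge r i).1, (attach_edge r i).1 < (attach_edge r i).2 & (attach_edge r i).2 <= r].
  by apply: att_props; rewrite lt0n i0 -ltnS ltn_ord.
rewrite ph_hv -(sum2 (fun a => F (hv x) (inl a))) ?(ltn_eqF h2) //; last exact: ltnW (leq_trans h2 h3).
apply: eq_bigl => a; rewrite /attached.
apply/andP/idP => [[-> //]|h]; split => //; move: h => /orP[/eqP->|/eqP->]; lia.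
Qed.

Lemma ph_hv0 i (x : 'I_(n i)) : i = 0 :> nat -> ph (hv x) = F (hv x) (u n r).
Proof.
move=> i0; rewrite ph_hv (big_pred1 (inord r)) // => a /=.
rewrite /attached /attach_edge i0 /=; apply/andP/eqP => [[/orP[/eqP a0|/eqP ar] an]|->].
- by rewrite a0 in an.
- by apply: val_inj; rewrite /= val_inord.
- rewrite val_inord // eqxx orbT; split => //; lia.
Qed.

Lemma pk_hv_u i (x : 'I_(n i)) e : 1 <= e <= r ->
  pk (hv x) (u n e) = enc 3 (if i == 0 :> nat then 0 else e) (idx (Tagged (fun j => 'I_(n j)) x)).
Proof. by move=> /andP[h1 h2]; rewrite /= /spk val_inord // (gtn_eqF h1). Qed.

Lemma adj_hv_u i (x : 'I_(n i)) e : e <= r -> adj (hv x) (u n e) = attached r i e.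
Proof. by move=> h; rewrite /= val_inord. Qed.


Hypothesis Hn2 : forall i, 2 <= n i.
Hypothesis Ha : maxdeg (H ord0) < mindeg (H (inord 1)).
Hypothesis Hb : forall i : 'I_r.+1, 1 <= i <= r.-1 -> maxdeg (H i) <= mindeg (H (inord i.+1)).

Lemma deg_le_max i x : deg (H i) x <= maxdeg (H i).
Proof. exact: (@leq_bigmax _ (fun x => deg (H i) x) x). Qed.
Lemma min_le_deg i x : mindeg (H i) <= deg (H i) x.
Proof. exact: (bigmin_le (fun x => deg (H i) x)). Qed.
Lemma min_le_max i : mindeg (H i) <= maxdeg (H i).
Proof.
have h0 : 0 < n i by apply: leq_trans (Hn2 i).
exact: leq_trans (min_le_deg i (Ordinal h0)) (deg_le_max _ _).
Qed.

Lemma Hchain_k k : forall i j : 'I_r.+1, 1 <= i -> j = i + k.+1 :> nat -> maxdeg (H i) <= mindeg (H j).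
Proof.
elim: k => [|k IH] i j h1 hj.
- have -> : j = inord i.+1 by apply: val_inj; rewrite /= val_inord; have := ltn_ord j; lia.
  apply: Hb; rewrite h1 /=; have := ltn_ord j; lia.
- pose m : 'I_r.+1 := inord (i + k.+1).
  have hm : m = i + k.+1 :> nat by rewrite val_inord //; have := ltn_ord j; lia.
  apply: leq_trans (IH i m h1 hm) _.
  apply: leq_trans (min_le_max m) _.
  have -> : j = inord m.+1 by apply: val_inj; rewrite /= val_inord hm; have := ltn_ord j; lia.
  apply: Hb; rewrite hm; have := ltn_ord j; lia.
Qed.

Lemma Hchain (i j : 'I_r.+1) : 1 <= i -> i < j -> maxdeg (H i) <= mindeg (H j).
Proof.
move=> h1 h2; apply: (Hchain_k (j - i).-1) => //; lia.
Qed.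

Lemma one_ord : (inord 1 : 'I_r.+1) = 1 :> nat.
Proof. by rewrite val_inord //; lia. Qed.

Lemma Hdeg (i i' : 'I_r.+1) x x' : i < i' -> deg (H i) x + (i == 0 :> nat) <= deg (H i') x'.
Proof.
move=> lt; case: (eqVneq (i : nat) 0) => [i0|i0].
- rewrite addn1; apply: leq_ltn_trans (deg_le_max _ _) _.
  have -> : i = ord0 by apply: val_inj.
  apply: leq_trans Ha _.
  case: (eqVneq (i' : nat) 1) => [i1|i1].
    have -> : (inord 1 : 'I_r.+1) = i' by apply: val_inj; rewrite /= one_ord i1.
    exact: min_le_deg.
  apply: leq_trans (min_le_max _) _; apply: leq_trans (min_le_deg _ x').
  by apply: Hchain; rewrite one_ord //; lia.
- rewrite addn0; apply: leq_trans (deg_le_max _ _) _; apply: leq_trans (min_le_deg _ x').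
  by apply: Hchain => //; rewrite lt0n.
Qed.

Hypothesis psort : forall i (x x' : 'I_(n i)), pos i x < pos i x' -> sl (hv x) <= sl (hv x').

Lemma enc2_lt i i' : i < i' -> enc 2 i 0 < enc 2 i' 0.
Proof. move=> h; apply: enc_lt_c1 => //; exact: Kc_pos. Qed.

Lemma sl_lt i i' (x : 'I_(n i)) (x' : 'I_(n i')) : i < i' -> sl (hv x) <= sl (hv x').
Proof.
move=> lt; apply: thr_le.
- by rewrite !cnt_low; have := Hdeg i i' x x' lt; rewrite (_ : (i' == 0 :> nat) = false) ?addn0 //; lia.
- move=> y y' /andP[hy ly] /andP[hy' ly']; apply: Flt => //.
  have [b1 _] := low_bound _ _ _ hy ly.
  have i'0 : i' != 0 :> nat by rewrite -lt0n; apply: leq_ltn_trans lt.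
  have [_ e2] := low_bound _ _ _ hy' ly'.
  rewrite (e2 i'0).
  exact: leq_ltn_trans b1 (enc2_lt i i' lt).
Qed.

Lemma R2a i i' (x : 'I_(n i)) (x' : 'I_(n i')) : i < i' -> w (hv x) < w (hv x').
Proof.
move=> lt; rewrite !w_split.
have h1 := sl_lt i i' x x' lt.
have i'0 : i' != 0 :> nat by rewrite -lt0n; apply: leq_ltn_trans lt.
have hi' : 1 <= i' <= r by rewrite lt0n i'0 -ltnS ltn_ord.
have [a1 a2 a3] := att_props i' hi'.
have hidx : idx (Tagged (fun j => 'I_(n j)) x) < idx (Tagged (fun j => 'I_(n j)) x') by apply: idx_tag.
suff : ph (hv x) < ph (hv x') by lia.
rewrite (ph_hv1 i' x' i'0).
case: (eqVneq (i : nat) 0) => [i0|i0].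
- rewrite (ph_hv0 i x i0); apply: ltn_addr; apply: Flt.
  + by rewrite adj_hv_u // /attached /attach_edge i0 /= eqxx orbT.
  + by rewrite adj_hv_u ?/attached ?eqxx //; lia.
  + rewrite !pk_hv_u ?i0 ?(negbTE i'0) /=; try lia.
    by apply: enc3_lt => //; apply: idx_Kc.
- have hi : 1 <= i <= r by rewrite lt0n i0 -ltnS ltn_ord.
  have [b1 b2 b3] := att_props i hi.
  have [m1 m2] := att_mono i i' (ltac:(by rewrite lt0n)) (ltnW lt) (ltac:(by rewrite -ltnS)).
  rewrite (ph_hv1 i x i0).
  have f1 : F (hv x) (u n (attach_edge r i).1) < F (hv x') (u n (attach_edge r i').1).
    apply: Flt; rewrite ?adj_hv_u ?/attached ?eqxx //; try lia.
    rewrite !pk_hv_u ?(negbTE i0) ?(negbTE i'0) /=; try lia.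
    by apply: enc3_lt => //; apply: idx_Kc.
  have f2 : F (hv x) (u n (attach_edge r i).2) < F (hv x') (u n (attach_edge r i').2).
    apply: Flt; rewrite ?adj_hv_u ?/attached ?eqxx ?orbT //; try lia.
    rewrite !pk_hv_u ?(negbTE i0) ?(negbTE i'0) /=; try lia.
    by apply: enc3_lt => //; apply: idx_Kc.
  lia.
Qed.


Lemma R2b i (x x' : 'I_(n i)) : pos i x < pos i x' -> w (hv x) < w (hv x').
Proof.
move=> lt; rewrite !w_split.
have h1 := psort i x x' lt.
have hidx := idx_pos i x x' lt.
suff : ph (hv x) < ph (hv x') by lia.
case: (eqVneq (i : nat) 0) => [i0|i0].
- rewrite (ph_hv0 i x i0) (ph_hv0 i x' i0); apply: Flt.
  + by rewrite adj_hv_u // /attached /attach_edge i0 /= eqxx orbT.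
  + by rewrite adj_hv_u // /attached /attach_edge i0 /= eqxx orbT.
  + rewrite !pk_hv_u ?i0 /=; try lia.
    by apply: enc3_lt => //; apply: idx_Kc.
- have hi : 1 <= i <= r by rewrite lt0n i0 -ltnS ltn_ord.
  have [b1 b2 b3] := att_props i hi.
  rewrite (ph_hv1 i x i0) (ph_hv1 i x' i0).
  have f1 : F (hv x) (u n (attach_edge r i).1) < F (hv x') (u n (attach_edge r i).1).
    apply: Flt; rewrite ?adj_hv_u ?/attached ?eqxx //; try lia.
    rewrite !pk_hv_u ?(negbTE i0) /=; try lia.
    by apply: enc3_lt => //; apply: idx_Kc.
  have f2 : F (hv x) (u n (attach_edge r i).2) < F (hv x') (u n (attach_edge r i).2).
    apply: Flt; rewrite ?adj_hv_u ?/attached ?eqxx ?orbT //; try lia.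
    rewrite !pk_hv_u ?(negbTE i0) /=; try lia.
    by apply: enc3_lt => //; apply: idx_Kc.
  lia.
Qed.

Lemma cnt_hv_hub i (x : 'I_(n i)) : \sum_(a | adj (hv x) (inl a)) 1 = 2.
Proof.
have [h1 h2 h3] : [/\ (attach_edge r i).1 <= r, (attach_edge r i).2 <= r & (attach_edge r i).1 != (attach_edge r i).2].
  have := ltn_ord i; by rewrite /attach_edge; do ! case: ifP => /=; move=> *; split; lia.
by rewrite (eq_bigl (fun a : 'I_r.+1 => (a == (attach_edge r i).1 :> nat) || (a == (attach_edge r i).2 :> nat))) // (sum2 (fun _ => 1)).
Qed.

Lemma cdeg_hv i (x : 'I_(n i)) : cdeg H (hv x) = 2 + deg (H i) x.
Proof. by rewrite cdegE sum_split cnt_hv_hub (sum_hv_inr i x (fun _ => 1)) degE. Qed.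

Lemma adj_u_hub j (b : 'I_r.+1) : j <= r -> adj (u n j) (inl b) = pan_adj r j b.
Proof. by move=> h; rewrite /= val_inord. Qed.

Lemma adj_u_inr j (z : TT) : j <= r -> adj (u n j) (inr z) = attached r (tag z) j.
Proof. by move=> h; rewrite /= val_inord. Qed.

Lemma hub2 j (G : 'I_r.+1 -> nat) : 1 <= j <= r ->
  \sum_(b : 'I_r.+1 | pan_adj r j b && (b != 0 :> nat)) G b = G (inord (aj j)) + G (inord (bj r j)).
Proof.
move=> hj; rewrite -sum2; first last.
- rewrite /aj /bj; do ! case: ifP => /=; move=> *; lia.
- rewrite /bj; do ! case: ifP => /=; move=> *; lia.
- rewrite /aj; do ! case: ifP => /=; move=> *; lia.
apply: eq_bigl => b; rewrite hub_nbr //; last by rewrite -ltnS.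
have hb : (b : nat) <= r by rewrite -ltnS.
rewrite /aj /bj; apply/idP/idP; do ! case: ifP => /=; move=> *; lia.
Qed.


Hypothesis Hd : cmaxdeg H ord_max <= cdeg H (u n 1).

Lemma maxdeg_le_r (i : 'I_r.+1) : maxdeg (H i) <= maxdeg (H ord_max).
Proof.
have h1 : forall j : 'I_r.+1, 1 <= j -> maxdeg (H j) <= maxdeg (H ord_max).
  move=> j hj; case: (ltngtP j r) => [lt|gt|eq].
  - by apply: leq_trans (Hchain j ord_max hj lt) (min_le_max _).
  - by have := ltn_ord j; rewrite ltnS leqNgt gt.
  - by have -> : j = ord_max by apply: val_inj.
case: (posnP i) => [i0|ip]; last exact: h1.
have -> : i = ord0 by apply: val_inj.
apply: leq_trans (ltnW Ha) _; apply: leq_trans (min_le_max _) _.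
by apply: h1; rewrite one_ord.
Qed.

Lemma cdeg_hv_le_u1 i (x : 'I_(n i)) : cdeg H (hv x) <= cdeg H (u n 1).
Proof.
apply: leq_trans _ Hd; rewrite cdeg_hv.
have y0 : 'I_(n ord_max) by exists 0; apply: leq_trans (Hn2 _).
have hc : forall y : 'I_(n ord_max), 2 + deg (H ord_max) y <= cmaxdeg H ord_max.
  by move=> y; rewrite -cdeg_hv; exact: (@leq_bigmax _ (fun y => cdeg H (hv y)) y).
have hm : maxdeg (H ord_max) <= cmaxdeg H ord_max - 2.
  apply/bigmax_leqP => y _; have := hc y; lia.
have := hc y0; have := deg_le_max i x; have := maxdeg_le_r i; lia.
Qed.

Lemma spk_lt4 a z : spk a z < enc 4 0 0.
Proof.
rewrite /spk; case: eqP => _; first exact: enc_pos.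
apply: enc_lt_b => //; last exact: idx_Kc.
case: eqP => _; first exact: Kc_pos.
apply: leq_ltn_trans r_Kc; rewrite -addnn; apply: leq_trans (leq_addr _ _); rewrite -ltnS; exact: ltn_ord.
Qed.

Lemma pk_hubs j b : 1 <= j <= r -> 1 <= b <= r -> pk (u n j) (u n b) = enc 4 (j + b) 0.
Proof. by move=> /andP[h1 h2] /andP[h3 h4]; rewrite /= !val_inord // (gtn_eqF h1) (gtn_eqF h3). Qed.

Lemma cnt_u_hub j : 1 <= j < r -> \sum_(b | adj (u n j) (inl b)) 1 = 2.
Proof.
move=> hj; apply: (etrans _ (hub2 j (fun _ => 1) _)); last by lia.
apply: eq_bigl => b; rewrite adj_u_hub; last by lia.
case: (eqVneq (b : nat) 0) => [b0|b0]; last by rewrite andbT.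
rewrite andbF b0 hub_nbr //; try lia.
by rewrite /aj /bj; do ! case: ifP => /=; move=> *; lia.
Qed.

Lemma R3 i (x : 'I_(n i)) : w (hv x) < w (u n 1).
Proof.
rewrite !wE !sum_split.
have e1r : (attach_edge r i).1 <= r.
  by have := ltn_ord i; rewrite /attach_edge; do ! case: ifP => /=; move=> *; lia.
have hub : \sum_(a | adj (hv x) (inl a)) F (hv x) (inl a) <
           \sum_(b | adj (u n 1) (inl b)) F (u n 1) (inl b).
  apply: (thr_gen (x0 := inord (attach_edge r i).1)).
  - by rewrite adj_hv_u ?/attached ?eqxx.
  - by rewrite cnt_hv_hub cnt_u_hub //; lia.
  - move=> a b ha hb; apply: Flt => //.
    have hb0 : (b : nat) != 0.
      apply/eqP => b0; move: hb; rewrite adj_u_hub ?b0; last by lia.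
      by rewrite pan_adjE /pan_arith /upair; lia.
    apply: leq_trans (spk_lt4 a _) _.
    rewrite /= val_inord; last by lia.
    by rewrite (negbTE hb0) /=; apply: enc_le0.
have hv_ : \sum_(z | adj (hv x) (inr z)) F (hv x) (inr z) <=
           \sum_(z | adj (u n 1) (inr z)) F (u n 1) (inr z).
  apply: thr_le.
  - have h := cdeg_hv_le_u1 i x.
    rewrite !cdegE !sum_split cnt_hv_hub cnt_u_hub in h; [lia|lia].
  - move=> z z' hz hz'; apply: Flt => //.
    have := low_inr i x z; rewrite /low => lz; apply: leq_trans lz _.
    rewrite /= /spk val_inord; last by lia.
    exact: enc_le0.
lia.
Qed.


Hypothesis Hmono : forall i j : 'I_r.+1, i <= j -> n i <= n j.

Lemma hubsum_eq j : 1 <= j < r ->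
  \sum_(b | adj (u n j) (inl b)) F (u n j) (inl b) = F (u n j) (u n (aj j)) + F (u n j) (u n (bj r j)).
Proof.
move=> hj; rewrite -(hub2 j (fun b => F (u n j) (inl b))); last by lia.
apply: eq_bigl => b; rewrite adj_u_hub; last by lia.
case: (eqVneq (b : nat) 0) => [b0|b0]; last by rewrite andbT.
rewrite andbF b0 hub_nbr //; try lia.
by rewrite /aj /bj; do ! case: ifP => /=; move=> *; lia.
Qed.

Lemma hubsum_ge j : 1 <= j <= r ->
  F (u n j) (u n (aj j)) + F (u n j) (u n (bj r j)) <= \sum_(b | adj (u n j) (inl b)) F (u n j) (inl b).
Proof.
move=> hj; rewrite -(hub2 j (fun b => F (u n j) (inl b))) //.
apply: leq_trans (sum_sub _ (fun b : 'I_r.+1 => b != 0 :> nat) _).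
apply: eq_leq; apply: eq_bigl => b; rewrite adj_u_hub //; lia.
Qed.

Lemma adj_hubs j b : 1 <= j <= r -> b <= r -> pan_adj r j b -> adj (u n j) (u n b).
Proof. by move=> hj hb h; rewrite /= !val_inord //; lia. Qed.

Lemma F_hub_le j j' a a' : 1 <= j <= r -> 1 <= j' <= r -> 1 <= a <= r -> 1 <= a' <= r ->
  pan_adj r j a -> pan_adj r j' a' -> j + a < j' + a' -> F (u n j) (u n a) < F (u n j') (u n a').
Proof.
move=> h1 h2 h3 h4 p1 p2 lt; apply: Flt; try apply: adj_hubs => //; try lia.
rewrite !pk_hubs //; apply: enc_lt_c1 => //; exact: Kc_pos.
Qed.

Lemma pan_aj j : 1 <= j <= r -> pan_adj r j (aj j).
Proof. move=> hj; rewrite hub_nbr ?eqxx //; rewrite /aj; do ! case: ifP => /=; move=> *; lia. Qed.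
Lemma pan_bj j : 1 <= j <= r -> pan_adj r j (bj r j).
Proof. move=> hj; rewrite hub_nbr ?eqxx ?orbT //; rewrite /bj; do ! case: ifP => /=; move=> *; lia. Qed.

Lemma hub_part j : 1 <= j < r ->
  \sum_(b | adj (u n j) (inl b)) F (u n j) (inl b) <=
  \sum_(b | adj (u n j.+1) (inl b)) F (u n j.+1) (inl b).
Proof.
move=> hj; rewrite hubsum_eq //; apply: leq_trans (hubsum_ge _ _); last by lia.
have hj1 : 1 <= j <= r by lia.
have hj2 : 1 <= j.+1 <= r by lia.
apply: leq_add.
- case: (eqVneq j 1) => [j1|j1].
    by subst j; rewrite /aj /= Fsym.
  apply: ltnW; apply: F_hub_le => //; try apply: pan_aj => //; rewrite /aj;
    do ! case: ifP => /=; move=> *; lia.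
- case: (eqVneq j r.-1) => [jr|jr].
    have e1 : bj r j = r by rewrite /bj jr; do ! case: ifP => /=; move=> *; lia.
    have e2 : bj r j.+1 = j by rewrite /bj jr; do ! case: ifP => /=; move=> *; lia.
    have e3 : j.+1 = r by lia.
    by rewrite e1 e2 e3 Fsym.
  apply: ltnW; apply: F_hub_le => //; try apply: pan_bj => //; rewrite /bj;
    do ! case: ifP => /=; move=> *; lia.
Qed.

Lemma att_nz (i : 'I_r.+1) j : 1 <= j < r -> attached r i j -> i != 0 :> nat.
Proof. move=> hj; apply: contraTN => /eqP i0; rewrite /attached /attach_edge i0 /=; lia. Qed.

Lemma cnt_u_inr j : 1 <= j <= r ->
  \sum_(z : TT | attached r (tag z) j && (tag z != 0 :> nat)) 1 = n (inord (alpha j)) + n (inord (beta r j)).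
Proof.
move=> hj; rewrite (sum_tag_cnt (fun i : 'I_r.+1 => attached r i j && (i != 0 :> nat))).
rewrite -sum2; first last.
- rewrite /alpha /beta; lia.
- rewrite /beta; lia.
- rewrite /alpha; lia.
apply: eq_bigl => i; rewrite att_char //; rewrite -ltnS; exact: ltn_ord.
Qed.

Lemma H_part j : 1 <= j < r ->
  \sum_(z | adj (u n j) (inr z)) F (u n j) (inr z) <
  \sum_(z | adj (u n j.+1) (inr z)) F (u n j.+1) (inr z).
Proof.
move=> hj.
apply: leq_trans (sum_sub _ (fun z : TT => tag z != 0 :> nat) _).
have ha : alpha j <= r by rewrite /alpha; lia.
have h0 : 0 < n (inord (alpha j)) by apply: leq_trans (Hn2 _).
apply: (thr_gen (x0 := Tagged (fun j => 'I_(n j)) (Ordinal h0))).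
- rewrite adj_u_inr /=; last by lia.
  have := att_char (r:=r) (i:=inord (alpha j)) (j:=j) hr (ltac:(lia)) (ltac:(by rewrite -ltnS; apply: ltn_ord)).
  by rewrite val_inord // eqxx => /andP[].
- rewrite (eq_bigl (fun z : TT => attached r (tag z) j && (tag z != 0 :> nat))); last first.
    move=> z; rewrite adj_u_inr; last by lia.
    by case hz: (attached r (tag z) j); rewrite //= (att_nz _ _ hj hz).
  rewrite cnt_u_inr; last by lia.
  rewrite (eq_bigl (fun z : TT => attached r (tag z) j.+1 && (tag z != 0 :> nat))); last first.
    by move=> z; rewrite adj_u_inr //; lia.
  rewrite cnt_u_inr; last by lia.
  apply: leq_add; apply: Hmono; rewrite !val_inord /alpha /beta; lia.
- move=> z z' hz /andP[hz' nz']; apply: Flt => //.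
  rewrite adj_u_inr in hz; last by lia.
  rewrite adj_u_inr in hz'; last by lia.
  rewrite /= /spk !val_inord; try lia.
  rewrite (_ : (j == 0) = false); last by lia.
  rewrite (_ : (j.+1 == 0) = false) // (negbTE nz') (negbTE (att_nz _ _ hj hz)).
  apply: enc_lt_c1 => //; exact: idx_Kc.
Qed.

Lemma R4 j : 1 <= j < r -> w (u n j) < w (u n j.+1).
Proof.
move=> hj; rewrite !wE !sum_split.
have := hub_part j hj; have := H_part j hj; lia.
Qed.

Lemma R4' j k : 1 <= j -> j < k -> k <= r -> w (u n j) < w (u n k).
Proof.
move=> hj; elim: k => // k IH hk hkr.
case: (eqVneq j k) => [->|ne]; first by apply: R4; lia.
apply: ltn_trans (IH _ _) (R4 _ _); lia.
Qed.


Hypothesis pos_inj : forall i, injective (pos i).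

Lemma hub_gt_hv i (x : 'I_(n i)) b : 1 <= b <= r -> w (hv x) < w (u n b).
Proof.
move=> hb; apply: leq_trans (R3 i x) _.
case: (eqVneq b 1) => [->//|b1]; apply: ltnW; apply: R4'; lia.
Qed.

Lemma hub_lt a b : a < b -> b <= r -> w (u n a) < w (u n b).
Proof.
move=> lt hb; case: (posnP a) => [a0|ap]; last by apply: R4'.
have h0 : 0 < n ord0 by apply: leq_trans (Hn2 _).
rewrite a0; apply: ltn_trans (R1 ord0 (Ordinal h0)) _; apply: hub_gt_hv; lia.
Qed.

Lemma hub_ne_hv (a : 'I_r.+1) i (x : 'I_(n i)) : w (inl a) != w (hv x).
Proof.
have -> : (inl a : V) = u n a by rewrite /u inord_val.
case: (posnP a) => [a0|ap].
  by rewrite a0; apply/eqP => e; have := R1 i x; rewrite e ltnn.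
apply/eqP => e; have := hub_gt_hv i x a (ltac:(by rewrite ap -ltnS ltn_ord)); rewrite e ltnn.
done.
Qed.

Lemma w_inj : injective w.
Proof.
move=> [a|[i x]] [b|[i' x']] e.
- have ea : (inl a : V) = u n a by rewrite /u inord_val.
  have eb : (inl b : V) = u n b by rewrite /u inord_val.
  rewrite ea eb in e; case: (ltngtP a b) => [lt|gt|eq].
  + by have := hub_lt a b lt (ltac:(rewrite -ltnS; exact: ltn_ord)); rewrite e ltnn.
  + by have := hub_lt b a gt (ltac:(rewrite -ltnS; exact: ltn_ord)); rewrite e ltnn.
  + by congr inl; apply: val_inj.
- by move: (hub_ne_hv a i' x'); rewrite -/(hv x') e eqxx.
- by move: (hub_ne_hv b i x); rewrite -/(hv x) e eqxx.
- rewrite -/(hv x) -/(hv x') in e *.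
  case: (ltngtP i i') => [lt|gt|eq].
  + by have := R2a i i' x x' lt; rewrite e ltnn.
  + by have := R2a i' i x' x gt; rewrite e ltnn.
  + have ii : i = i' by apply: val_inj.
    subst i'; case: (ltngtP (pos i x) (pos i x')) => [lt|gt|eq'].
    * by have := R2b i x x' lt; rewrite e ltnn.
    * by have := R2b i x' x gt; rewrite e ltnn.
    * by rewrite (pos_inj i _ _ eq').
Qed.

Lemma antimagic_lab : antimagic adj.
Proof.
exists lab; split.
- exact: (rk_injE key_inj).
- move=> e eE; exact: rk_bound.
- exact: w_inj.
Qed.

End Main.

Unset Implicit Arguments.

Section Indep.
Variables (r : nat) (n : 'I_r.+1 -> nat) (H : forall i : 'I_r.+1, rel 'I_(n i)).
Hypothesis hr : 3 <= r.
Hypothesis Hsimple : forall i, simple_graph (H i).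
Variables (pos pos' : forall i : 'I_r.+1, 'I_(n i) -> nat).
Local Notation V := (cvert n).
Local Notation adj := (cadj H).

Lemma spk_indep (a : 'I_r.+1) z : spk r n pos a z = spk r n pos' a z \/
  (enc r n 3 0 0 <= spk r n pos a z /\ enc r n 3 0 0 <= spk r n pos' a z).
Proof. rewrite /spk; case: (nat_of_ord a == 0); [by left | right; split; exact: (enc_le0 r n hr)]. Qed.

Lemma pk_indep (p q : V) : pk r n pos p q = pk r n pos' p q \/
  (enc r n 3 0 0 <= pk r n pos p q /\ enc r n 3 0 0 <= pk r n pos' p q).
Proof.
case: p q => [a|z] [b|z'] /=; try by left.
- exact: spk_indep.
- exact: spk_indep.
Qed.

Lemma key_lt (ps : forall i : 'I_r.+1, 'I_(n i) -> nat) (e e' : {set V}) :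
  pkset r n ps e < pkset r n ps e' -> key r n ps e < key r n ps e'.
Proof.
move=> lt; rewrite /key.
have := ltn_ord (enum_rank e); rewrite -/(Cset r n) => hc.
apply: (@leq_trans ((pkset r n ps e).+1 * Cset r n)).
  by rewrite mulSn addnC ltn_add2r.
apply: leq_trans (leq_addr _ _); exact: leq_mul.
Qed.

Lemma lab_indep (p y : V) : adj p y -> pk r n pos p y < enc r n 3 0 0 ->
  pk r n pos p y = pk r n pos' p y -> lab r n H pos [set p; y] = lab r n H pos' [set p; y].
Proof.
move=> hy hl hs; rewrite /lab /rk; congr (_.+1); apply: eq_card => e'; rewrite !inE.
match goal with |- ?X && _ = _ => case: (boolP X) => //= end.
move=> /existsP[x' /existsP[y' /andP[hxy /eqP ->]]].
have ne := adj_neq (cadj_irr r n H hr Hsimple) hy.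
have ne' := adj_neq (cadj_irr r n H hr Hsimple) hxy.
have hk : key r n pos [set p; y] = key r n pos' [set p; y] by rewrite /key !pkset2 // hs.
case: (pk_indep x' y') => [eq|[g1 g2]].
  have hk' : key r n pos [set x'; y'] = key r n pos' [set x'; y'] by rewrite /key !pkset2 // eq.
  by rewrite hk hk'.
have f1 : key r n pos [set p; y] < key r n pos [set x'; y'].
  by apply: key_lt; rewrite !pkset2 //; apply: leq_trans g1.
have f2 : key r n pos' [set p; y] < key r n pos' [set x'; y'].
  by apply: key_lt; rewrite !pkset2 // -hs; apply: leq_trans g2.
by rewrite ltnNge (ltnW f1) ltnNge (ltnW f2).
Qed.

Lemma sl_indep i (x : 'I_(n i)) : sl r n H pos (hv x) = sl r n H pos' (hv x).
Proof.
rewrite /sl; apply: eq_big.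
- case=> [a|z]; first by rewrite !low_hub.
  by rewrite !low_inr.
- move=> y /andP[hy hl]; rewrite /F; apply: lab_indep => //.
  case: y hy hl => [a|z] hy hl //.
  by move: hl; rewrite low_hub // => /eqP a0; rewrite /= /spk a0.
Qed.
End Indep.

Theorem theorem1 (r : nat) (n : 'I_r.+1 -> nat)
    (H : forall i : 'I_r.+1, rel 'I_(n i)) :
  3 <= r ->
  (forall i, simple_graph (H i)) ->
  (forall i, connected_graph (H i)) ->
  (forall i, 2 <= n i) ->
  (forall i j : 'I_r.+1, i <= j -> n i <= n j) ->
  (* (a) *) maxdeg (H ord0) < mindeg (H (inord 1)) ->
  (* (b) *) (forall i : 'I_r.+1, 1 <= i <= r.-1 -> maxdeg (H i) <= mindeg (H (inord i.+1))) ->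
  (* (c) *) (forall i : 'I_r.+1, cdeg H (u n 0) <= cmindeg H i) ->
  (* (d) *) cmaxdeg H ord_max <= cdeg H (u n 1) ->
  antimagic (cadj H).
Proof.
move=> hr Hs _ Hn2 Hmono Ha Hb Hc Hd.
pose pos0 := fun (i : 'I_r.+1) (x : 'I_(n i)) => (x : nat).
pose pos := fun i => srank (fun x : 'I_(n i) => sl r n H pos0 (hv x)).
apply: (@antimagic_lab r n H hr Hs pos _ Hc Hn2 Ha Hb _ Hd Hmono _).
- move=> i x; exact: srank_lt.
- move=> i x x' lt; rewrite !(sl_indep r n H hr Hs pos pos0); exact: srank_sorted lt.
- move=> i; exact: srank_inj.
Qed.
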